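(* Suppose $\Gamma_1\triangleright W_1\simeq\Gamma_2\triangleright W_2$, where both configurations are well-formed. Then for every channel $c$, if $c$ is idle in $\Gamma_1$ then $c$ is idle in $\Gamma_2$.
   Context: CCCP syntax. Fix a set of channels (ranged over by $c,d$) and a set of values containing data variables $x,y$ and a special error value $\mathtt{err}$; closed values $v,w$ contain no variables, and each closed value $v$ has a transmission time $\delta_v\in\mathbb{N}$ with $\delta_v\ge 1$. Expressions $e$ are built from values; closed expressions evaluate to closed values via $[\![e]\!]$. Station code (processes) is given by $P,Q ::= c!\langle e\rangle.P \mid \lfloor ?c(x).P\rfloor Q \mid \sigma.P \mid \tau.P \mid P+Q \mid [b]P,Q \mid X \mid \mathbf{0} \mid \mathrm{fix}\,X.P$, where $b$ is either $e_1=e_2$ or $\mathrm{exp}(c)$, $[b]P,Q$ is a conditional (then-branch $P$, else-branch $Q$), $\lfloor ?c(x).P\rfloor Q$ is a receiver on $c$ with timeout branch $Q$ ($x$ bound in $P$), $\sigma.P$ is a one-unit delay and $\sigma^n.P$ denotes $n$ nested delays. System terms are $W ::= P \mid \lfloor ?c(x).P\rfloor \mid W_1|W_2 \mid \nu c{:}(n,v).W$, where $\lfloor ?c(x).P\rfloor$ is an active receiver ($x$ bound in $P$) and $\nu c{:}(n,v).W$ restricts $c$ with local channel state $(n,v)$. In $\mathrm{fix}\,X.P$ every occurrence of $X$ in $P$ is guarded, i.e. lies within a broadcast prefix, a receiver continuation, a timeout branch, a $\sigma$-prefix, or a branch of a conditional. Terms are identified up to $\alpha$-conversion. A channel environment is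 a map $\Gamma$ from channels to $\mathbb{N}\times$(closed values); write $\Gamma\vdash_t c:n$ and $\Gamma\vdash_v c:w$ when $\Gamma(c)=(n,w)$; $c$ is idle in $\Gamma$ if $\Gamma\vdash_t c:0$ and exposed otherwise; $\Gamma[c\mapsto(n,v)]$ is $\Gamma$ updated at $c$; $\Gamma\le\Gamma'$ iff for every $c$, $\Gamma\vdash_t c:n$ and $\Gamma'\vdash_t c:m$ imply $n\le m$. A configuration $\Gamma\triangleright W$ is a channel environment together with a closed system term (no free data or process variables). Intensional semantics. Actions $\lambda$ are $c!v$, $c?v$, $\sigma$, $\tau$. The environment update $\lambda(\Gamma)$ is: $\sigma(\Gamma)(c)=(\max(n-1,0),w)$ whenever $\Gamma(c)=(n,w)$; $c!v(\Gamma)$ agrees with $\Gamma$ except at $c$, where it is $(\delta_v,v)$ if $c$ is idle in $\Gamma$ and $(\max(\delta_v,n),\mathtt{err})$ if $\Gamma\vdash_t c:n>0$; $c?v(\Gamma)=c!v(\Gamma)$; $\tau(\Gamma)=\Gamma$. The predicate $\mathrm{rcv}(W,c)$ on terms is: true for $\lfloor ?d(x).P\rfloor Q$ iff $d=c$; $\mathrm{rcv}(P+Q,c)=\mathrm{rcv}(P,c)\vee\mathrm{rcv}(Q,c)$; $\mathrm{rcv}(\mathrm{fix}\,X.P,c)=\mathrm{rcv}(P,c)$; $\mathrm{rcv}(W_1|W_2,c)=\mathrm{rcv}(W_1,c)\vee\mathrm{rcv}(W_2,c)$; $\mathrm{rcv}(\nu d{:}(n,v).W,c)=\mathrm{rcv}(W,c)$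 (with $d\neq c$ by $\alpha$-conversion); false for all other forms (broadcasts, $\tau.P$, $\sigma.P$, conditionals, $X$, $\mathbf 0$, active receivers). Then $\mathrm{rcv}(\Gamma\triangleright W,c)$ holds iff $c$ is idle in $\Gamma$ and $\mathrm{rcv}(W,c)$. Transitions $\Gamma\triangleright W\xrightarrow{\lambda}W'$ are the least relation closed under: (Snd) $[\![e]\!]=v$ implies $\Gamma\triangleright c!\langle e\rangle.P\xrightarrow{c!v}\sigma^{\delta_v}.P$; (Rcv) $c$ idle in $\Gamma$ implies $\Gamma\triangleright\lfloor ?c(x).P\rfloor Q\xrightarrow{c?v}\lfloor ?c(x).P\rfloor$; (RcvIgn) $\neg\mathrm{rcv}(\Gamma\triangleright W,c)$ implies $\Gamma\triangleright W\xrightarrow{c?v}W$; (Sync) $\Gamma\triangleright W_1\xrightarrow{c!v}W_1'$ and $\Gamma\triangleright W_2\xrightarrow{c?v}W_2'$ imply $\Gamma\triangleright W_1|W_2\xrightarrow{c!v}W_1'|W_2'$, and symmetrically; (RcvPar) $\Gamma\triangleright W_i\xrightarrow{c?v}W_i'$ for $i=1,2$ imply $\Gamma\triangleright W_1|W_2\xrightarrow{c?v}W_1'|W_2'$; (TimeNil) $\Gamma\triangleright\mathbf 0\xrightarrow{\sigma}\mathbf 0$; (Sleep) $\Gamma\triangleright\sigma.P\xrightarrow{\sigma}P$; (ActRcv) $\Gamma\vdash_t c:n$, $n>1$ imply $\Gamma\triangleright\lfloor ?c(x).P\rfloor\xrightarrow{\sigma}\lfloor ?c(x).P\rfloor$;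 (EndRcv) $\Gamma\vdash_t c:1$, $\Gamma\vdash_v c:w$ imply $\Gamma\triangleright\lfloor ?c(x).P\rfloor\xrightarrow{\sigma}\{w/x\}P$; (Timeout) $c$ idle in $\Gamma$ implies $\Gamma\triangleright\lfloor ?c(x).P\rfloor Q\xrightarrow{\sigma}Q$; (RcvLate) $c$ exposed in $\Gamma$ implies $\Gamma\triangleright\lfloor ?c(x).P\rfloor Q\xrightarrow{\tau}\lfloor ?c(x).\{\mathtt{err}/x\}P\rfloor$; (Tau) $\Gamma\triangleright\tau.P\xrightarrow{\tau}P$; (Then)/(Else) $\Gamma\triangleright[b]P,Q\xrightarrow{\tau}\sigma.P$ if $[\![b]\!]_\Gamma$ is true and $\xrightarrow{\tau}\sigma.Q$ otherwise, where $[\![e_1=e_2]\!]_\Gamma$ is true iff $[\![e_1]\!]=[\![e_2]\!]$ and $[\![\mathrm{exp}(c)]\!]_\Gamma$ is true iff $c$ is exposed in $\Gamma$; (TimePar) $\Gamma\triangleright W_i\xrightarrow{\sigma}W_i'$ for $i=1,2$ imply $\Gamma\triangleright W_1|W_2\xrightarrow{\sigma}W_1'|W_2'$; (TauPar) $\Gamma\triangleright W_1\xrightarrow{\tau}W_1'$ implies $\Gamma\triangleright W_1|W_2\xrightarrow{\tau}W_1'|W_2$, and symmetrically; (Rec) $\Gamma\triangleright\{\mathrm{fix}\,X.P/X\}P\xrightarrow{\lambda}W$ implies $\Gamma\triangleright\mathrm{fix}\,X.P\xrightarrow{\lambda}W$; (Sum) for $\lambda\in\{\tau,c!v\}$, $\Gamma\triangleright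 P\xrightarrow{\lambda}W$ implies $\Gamma\triangleright P+Q\xrightarrow{\lambda}W$, and symmetrically; (SumTime) $\Gamma\triangleright P\xrightarrow{\sigma}P'$, $\Gamma\triangleright Q\xrightarrow{\sigma}Q'$ imply $\Gamma\triangleright P+Q\xrightarrow{\sigma}P'+Q'$; (SumRcv) $\Gamma\triangleright P\xrightarrow{c?v}W$ and $\mathrm{rcv}(\Gamma\triangleright P,c)$ imply $\Gamma\triangleright P+Q\xrightarrow{c?v}W$, and symmetrically; (ResI) $\Gamma[c\mapsto(n,v)]\triangleright W\xrightarrow{c!w}W'$ implies $\Gamma\triangleright\nu c{:}(n,v).W\xrightarrow{\tau}\nu c{:}(c!w(\Gamma[c\mapsto(n,v)]))(c).W'$; (ResV) $\Gamma[c\mapsto(n,v)]\triangleright W\xrightarrow{\lambda}W'$ with $c$ not occurring in $\lambda$ implies $\Gamma\triangleright\nu c{:}(n,v).W\xrightarrow{\lambda}\nu c{:}(\lambda(\Gamma[c\mapsto(n,v)]))(c).W'$. Reductions. $\Gamma\triangleright W\to\Gamma'\triangleright W'$ iff $\Gamma\triangleright W\xrightarrow{\lambda}W'$ for some $\lambda\in\{c!v,\sigma,\tau\}$ and $\Gamma'=\lambda(\Gamma)$; it is instantaneous ($\to_i$) if $\lambda\neq\sigma$ and timed ($\to_\sigma$) if $\lambda=\sigma$. Reduction barbed congruence. $\Gamma\triangleright W\downarrow_c$ iff $c$ is exposed in $\Gamma$; $\mathcal C\Downarrow_c$ iff $\mathcal C\to^*\mathcal C'$ for some $\mathcal C'$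 with $\mathcal C'\downarrow_c$. A relation $\mathcal R$ on configurations is barb preserving if $\mathcal C_1\mathcal R\mathcal C_2$ and $\mathcal C_1\Downarrow_c$ imply $\mathcal C_2\Downarrow_c$; reduction closed if $\mathcal C_1\mathcal R\mathcal C_2$ and $\mathcal C_1\to\mathcal C_1'$ imply $\mathcal C_2\to^*\mathcal C_2'$ for some $\mathcal C_2'$ with $\mathcal C_1'\mathcal R\mathcal C_2'$; contextual if $(\Gamma_1\triangleright W_1)\mathcal R(\Gamma_2\triangleright W_2)$ implies $(\Gamma_1\triangleright W_1|W)\mathcal R(\Gamma_2\triangleright W_2|W)$ for every closed system term $W$. Reduction barbed congruence $\simeq$ is the largest symmetric relation on configurations that is barb preserving, reduction closed and contextual. Well-formedness. The set of well-formed configurations is the least set such that: $\Gamma\triangleright P$ is well-formed for every closed process $P$; $\Gamma\triangleright\lfloor ?c(x).P\rfloor$ is well-formed whenever $c$ is exposed in $\Gamma$; $\Gamma\triangleright W_1|W_2$ is well-formed whenever $\Gamma\triangleright W_1$ and $\Gamma\triangleright W_2$ are; $\Gamma\triangleright\nu c{:}(n,v).W$ is well-formed whenever $\Gamma[c\mapsto(n,v)]\triangleright W$ is. *)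

(* Defs.v *)
From Stdlib Require Import List Arith PeanoNat Relations.Relation_Operators.
Import ListNotations.

Set Implicit Arguments.

(* Channels, data variables and process variables are names (natural numbers;
   an infinite supply is needed for alpha-conversion of restricted channels). *)
Definition chan := nat.
Definition dvar := nat.
Definition pvar := nat.

Record signature := Signature {
  val : Type;
  err : val;
  delta : val -> nat;                    (* transmission time delta_v *)
  fsym : Type;
  interp : fsym -> list val -> val
}.

Section CCCP.
Variable Sg : signature.
Local Notation V := (val Sg).

Inductive exp : Type :=
  | EVal (v : V)
  | EVar (x : dvar)
  | EApp (f : fsym Sg) (es : list exp).

Fixpoint eval (e : exp) : option V :=
  match e with
  | EVal v => Some v
  | EVar _ => None
  | EApp f es =>
      match (fix evs (l : list exp) : option (list V) :=
               match l with
               | [] => Some []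
               | e1 :: l1 => match eval e1, evs l1 with
                             | Some v, Some vs => Some (v :: vs)
                             | _, _ => None end
               end) es with
      | Some vs => Some (interp Sg f vs)
      | None => None
      end
  end.

Fixpoint subst_e (x : dvar) (w : V) (e : exp) : exp :=
  match e with
  | EVal v => EVal v
  | EVar y => if Nat.eqb y x then EVal w else EVar y
  | EApp f es => EApp f (map (subst_e x w) es)
  end.

Fixpoint closed_e (xs : list dvar) (e : exp) : Prop :=
  match e with
  | EVal _ => True
  | EVar y => In y xs
  | EApp _ es => (fix all (l : list exp) : Prop :=
                    match l with [] => True | e1 :: l1 => closed_e xs e1 /\ all l1 end) es
  end.

(* Boolean guards b : e1 = e2 or exp(c). *)
Inductive cond : Type :=
  | CEq (e1 e2 : exp)
  | CExp (c : chan).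

Inductive proc : Type :=
  | PSnd (c : chan) (e : exp) (P : proc)
  | PRcv (c : chan) (x : dvar) (P Q : proc)         (* |_?c(x).P_| Q *)
  | PSigma (P : proc)
  | PTau (P : proc)
  | PSum (P Q : proc)
  | PIf (b : cond) (P Q : proc)
  | PVar (X : pvar)
  | PNil
  | PFix (X : pvar) (P : proc).

Inductive sys : Type :=
  | SProc (P : proc)
  | SActRcv (c : chan) (x : dvar) (P : proc)
  | SPar (W1 W2 : sys)
  | SRes (c : chan) (n : nat) (v : V) (W : sys).    (* nu c:(n,v).W *)

Fixpoint sigma_n (n : nat) (P : proc) : proc :=
  match n with 0 => P | S m => PSigma (sigma_n m P) end.

Definition subst_c (x : dvar) (w : V) (b : cond) : cond :=
  match b with
  | CEq e1 e2 => CEq (subst_e x w e1) (subst_e x w e2)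
  | CExp c => CExp c
  end.

Fixpoint subst_p (x : dvar) (w : V) (P : proc) : proc :=
  match P with
  | PSnd c e P1 => PSnd c (subst_e x w e) (subst_p x w P1)
  | PRcv c y P1 Q1 =>
      if Nat.eqb y x then PRcv c y P1 (subst_p x w Q1)
      else PRcv c y (subst_p x w P1) (subst_p x w Q1)
  | PSigma P1 => PSigma (subst_p x w P1)
  | PTau P1 => PTau (subst_p x w P1)
  | PSum P1 Q1 => PSum (subst_p x w P1) (subst_p x w Q1)
  | PIf b P1 Q1 => PIf (subst_c x w b) (subst_p x w P1) (subst_p x w Q1)
  | PVar X => PVar X
  | PNil => PNil
  | PFix X P1 => PFix X (subst_p x w P1)
  end.

Fixpoint subst_X (X : pvar) (R : proc) (P : proc) : proc :=
  match P with
  | PSnd c e P1 => PSnd c e (subst_X X R P1)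
  | PRcv c y P1 Q1 => PRcv c y (subst_X X R P1) (subst_X X R Q1)
  | PSigma P1 => PSigma (subst_X X R P1)
  | PTau P1 => PTau (subst_X X R P1)
  | PSum P1 Q1 => PSum (subst_X X R P1) (subst_X X R Q1)
  | PIf b P1 Q1 => PIf b (subst_X X R P1) (subst_X X R Q1)
  | PVar Y => if Nat.eqb Y X then R else PVar Y
  | PNil => PNil
  | PFix Y P1 => if Nat.eqb Y X then PFix Y P1 else PFix Y (subst_X X R P1)
  end.

(* Channel transposition (used for alpha-conversion of restricted channels). *)
Definition swap_ch (a b c : chan) : chan :=
  if Nat.eqb c a then b else if Nat.eqb c b then a else c.

Definition swap_cond (a b : chan) (bb : cond) : cond :=
  match bb with CEq e1 e2 => CEq e1 e2 | CExp c => CExp (swap_ch a b c) end.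

Fixpoint swap_p (a b : chan) (P : proc) : proc :=
  match P with
  | PSnd c e P1 => PSnd (swap_ch a b c) e (swap_p a b P1)
  | PRcv c y P1 Q1 => PRcv (swap_ch a b c) y (swap_p a b P1) (swap_p a b Q1)
  | PSigma P1 => PSigma (swap_p a b P1)
  | PTau P1 => PTau (swap_p a b P1)
  | PSum P1 Q1 => PSum (swap_p a b P1) (swap_p a b Q1)
  | PIf bb P1 Q1 => PIf (swap_cond a b bb) (swap_p a b P1) (swap_p a b Q1)
  | PVar X => PVar X
  | PNil => PNil
  | PFix X P1 => PFix X (swap_p a b P1)
  end.

Fixpoint swap_s (a b : chan) (W : sys) : sys :=
  match W with
  | SProc P => SProc (swap_p a b P)
  | SActRcv c x P => SActRcv (swap_ch a b c) x (swap_p a b P)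
  | SPar W1 W2 => SPar (swap_s a b W1) (swap_s a b W2)
  | SRes c n v W1 => SRes (swap_ch a b c) n v (swap_s a b W1)
  end.

Definition ch_in_cond (d : chan) (b : cond) : Prop :=
  match b with CEq _ _ => False | CExp c => c = d end.

Fixpoint ch_in_p (d : chan) (P : proc) : Prop :=
  match P with
  | PSnd c _ P1 => c = d \/ ch_in_p d P1
  | PRcv c _ P1 Q1 => c = d \/ ch_in_p d P1 \/ ch_in_p d Q1
  | PSigma P1 | PTau P1 | PFix _ P1 => ch_in_p d P1
  | PSum P1 Q1 => ch_in_p d P1 \/ ch_in_p d Q1
  | PIf b P1 Q1 => ch_in_cond d b \/ ch_in_p d P1 \/ ch_in_p d Q1
  | PVar _ | PNil => False
  end.

Fixpoint free_ch (d : chan) (W : sys) : Prop :=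
  match W with
  | SProc P => ch_in_p d P
  | SActRcv c _ P => c = d \/ ch_in_p d P
  | SPar W1 W2 => free_ch d W1 \/ free_ch d W2
  | SRes c _ _ W1 => c <> d /\ free_ch d W1
  end.

Definition closed_cond (xs : list dvar) (b : cond) : Prop :=
  match b with CEq e1 e2 => closed_e xs e1 /\ closed_e xs e2 | CExp _ => True end.

Fixpoint closed_p (xs : list dvar) (Xs : list pvar) (P : proc) : Prop :=
  match P with
  | PSnd _ e P1 => closed_e xs e /\ closed_p xs Xs P1
  | PRcv _ x P1 Q1 => closed_p (x :: xs) Xs P1 /\ closed_p xs Xs Q1
  | PSigma P1 | PTau P1 => closed_p xs Xs P1
  | PSum P1 Q1 => closed_p xs Xs P1 /\ closed_p xs Xs Q1
  | PIf b P1 Q1 => closed_cond xs b /\ closed_p xs Xs P1 /\ closed_p xs Xs Q1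
  | PVar X => In X Xs
  | PNil => True
  | PFix X P1 => closed_p xs (X :: Xs) P1
  end.

Fixpoint unguarded (X : pvar) (P : proc) : Prop :=
  match P with
  | PSnd _ _ _ | PRcv _ _ _ _ | PSigma _ | PIf _ _ _ | PNil => False
  | PTau P1 => unguarded X P1
  | PSum P1 Q1 => unguarded X P1 \/ unguarded X Q1
  | PVar Y => Y = X
  | PFix Y P1 => Y <> X /\ unguarded X P1
  end.

Fixpoint guarded_rec (P : proc) : Prop :=
  match P with
  | PSnd _ _ P1 | PSigma P1 | PTau P1 => guarded_rec P1
  | PRcv _ _ P1 Q1 | PSum P1 Q1 | PIf _ P1 Q1 => guarded_rec P1 /\ guarded_rec Q1
  | PVar _ | PNil => True
  | PFix X P1 => ~ unguarded X P1 /\ guarded_rec P1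
  end.

Fixpoint closed_s (xs : list dvar) (W : sys) : Prop :=
  match W with
  | SProc P => closed_p xs [] P /\ guarded_rec P
  | SActRcv _ x P => closed_p (x :: xs) [] P /\ guarded_rec P
  | SPar W1 W2 => closed_s xs W1 /\ closed_s xs W2
  | SRes _ _ _ W1 => closed_s xs W1
  end.

Definition closed_sys (W : sys) : Prop := closed_s [] W.

Definition env := chan -> nat * V.

Definition upd (G : env) (c : chan) (p : nat * V) : env :=
  fun d => if Nat.eqb d c then p else G d.

Definition idle (G : env) (c : chan) : Prop := fst (G c) = 0.
Definition exposed (G : env) (c : chan) : Prop := fst (G c) <> 0.

Inductive label : Type :=
  | LSnd (c : chan) (v : V)
  | LRcv (c : chan) (v : V)
  | LSig
  | LTau.

Definition ch_in_label (c : chan) (l : label) : Prop :=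
  match l with LSnd d _ | LRcv d _ => d = c | _ => False end.

Definition tx_upd (G : env) (c : chan) (v : V) : env :=
  upd G c (if Nat.eqb (fst (G c)) 0 then (delta Sg v, v)
           else (Nat.max (delta Sg v) (fst (G c)), err Sg)).

Definition act_env (l : label) (G : env) : env :=
  match l with
  | LSig => fun c => (fst (G c) - 1, snd (G c))
  | LSnd c v | LRcv c v => tx_upd G c v
  | LTau => G
  end.

Fixpoint rcv_p (P : proc) (c : chan) : Prop :=
  match P with
  | PRcv d _ _ _ => d = c
  | PSum P1 Q1 => rcv_p P1 c \/ rcv_p Q1 c
  | PFix _ P1 => rcv_p P1 c
  | _ => False
  end.

(* For nu d.W, alpha-conversion makes d <> c; if d = c the bound channel is
   renamed away and no receiver on (the free channel) c remains. *)
Fixpoint rcv_s (W : sys) (c : chan) : Prop :=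
  match W with
  | SProc P => rcv_p P c
  | SActRcv _ _ _ => False
  | SPar W1 W2 => rcv_s W1 c \/ rcv_s W2 c
  | SRes d _ _ W1 => d <> c /\ rcv_s W1 c
  end.

Definition rcv_conf (G : env) (W : sys) (c : chan) : Prop := idle G c /\ rcv_s W c.

Definition beval (G : env) (b : cond) : Prop :=
  match b with
  | CEq e1 e2 => eval e1 = eval e2
  | CExp c => exposed G c
  end.

Inductive trans : env -> sys -> label -> sys -> Prop :=
  | tSnd G c e P v :
      eval e = Some v ->
      trans G (SProc (PSnd c e P)) (LSnd c v) (SProc (sigma_n (delta Sg v) P))
  | tRcv G c x P Q v :
      idle G c -> trans G (SProc (PRcv c x P Q)) (LRcv c v) (SActRcv c x P)
  | tRcvIgn G W c v :
      ~ rcv_conf G W c -> trans G W (LRcv c v) W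
  | tSyncL G W1 W2 W1' W2' c v :
      trans G W1 (LSnd c v) W1' -> trans G W2 (LRcv c v) W2' ->
      trans G (SPar W1 W2) (LSnd c v) (SPar W1' W2')
  | tSyncR G W1 W2 W1' W2' c v :
      trans G W1 (LRcv c v) W1' -> trans G W2 (LSnd c v) W2' ->
      trans G (SPar W1 W2) (LSnd c v) (SPar W1' W2')
  | tRcvPar G W1 W2 W1' W2' c v :
      trans G W1 (LRcv c v) W1' -> trans G W2 (LRcv c v) W2' ->
      trans G (SPar W1 W2) (LRcv c v) (SPar W1' W2')
  | tTimeNil G : trans G (SProc PNil) LSig (SProc PNil)
  | tSleep G P : trans G (SProc (PSigma P)) LSig (SProc P)
  | tActRcv G c x P :
      1 < fst (G c) -> trans G (SActRcv c x P) LSig (SActRcv c x P)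
  | tEndRcv G c x P :
      fst (G c) = 1 -> trans G (SActRcv c x P) LSig (SProc (subst_p x (snd (G c)) P))
  | tTimeout G c x P Q :
      idle G c -> trans G (SProc (PRcv c x P Q)) LSig (SProc Q)
  | tRcvLate G c x P Q :
      exposed G c ->
      trans G (SProc (PRcv c x P Q)) LTau (SActRcv c x (subst_p x (err Sg) P))
  | tTau G P : trans G (SProc (PTau P)) LTau (SProc P)
  | tThen G b P Q : beval G b -> trans G (SProc (PIf b P Q)) LTau (SProc (PSigma P))
  | tElse G b P Q : ~ beval G b -> trans G (SProc (PIf b P Q)) LTau (SProc (PSigma Q))
  | tTimePar G W1 W2 W1' W2' :
      trans G W1 LSig W1' -> trans G W2 LSig W2' ->
      trans G (SPar W1 W2) LSig (SPar W1' W2')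
  | tTauParL G W1 W2 W1' :
      trans G W1 LTau W1' -> trans G (SPar W1 W2) LTau (SPar W1' W2)
  | tTauParR G W1 W2 W2' :
      trans G W2 LTau W2' -> trans G (SPar W1 W2) LTau (SPar W1 W2')
  | tRec G X P l W :
      trans G (SProc (subst_X X (PFix X P) P)) l W -> trans G (SProc (PFix X P)) l W
  | tSumL G P Q l W :
      (l = LTau \/ exists c v, l = LSnd c v) ->
      trans G (SProc P) l W -> trans G (SProc (PSum P Q)) l W
  | tSumR G P Q l W :
      (l = LTau \/ exists c v, l = LSnd c v) ->
      trans G (SProc Q) l W -> trans G (SProc (PSum P Q)) l W
  | tSumTime G P Q P' Q' :
      trans G (SProc P) LSig (SProc P') -> trans G (SProc Q) LSig (SProc Q') ->
      trans G (SProc (PSum P Q)) LSig (SProc (PSum P' Q'))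
  | tSumRcvL G P Q c v W :
      trans G (SProc P) (LRcv c v) W -> rcv_conf G (SProc P) c ->
      trans G (SProc (PSum P Q)) (LRcv c v) W
  | tSumRcvR G P Q c v W :
      trans G (SProc Q) (LRcv c v) W -> rcv_conf G (SProc Q) c ->
      trans G (SProc (PSum P Q)) (LRcv c v) W
  | tResI G c n v W W' w :
      trans (upd G c (n, v)) W (LSnd c w) W' ->
      trans G (SRes c n v W) LTau
        (SRes c (fst (act_env (LSnd c w) (upd G c (n, v)) c))
                (snd (act_env (LSnd c w) (upd G c (n, v)) c)) W')
  | tResV G c n v W W' l :
      ~ ch_in_label c l ->
      trans (upd G c (n, v)) W l W' ->
      trans G (SRes c n v W) l
        (SRes c (fst (act_env l (upd G c (n, v)) c))
                (snd (act_env l (upd G c (n, v)) c)) W')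
  | tResAlpha G c d n v W l W' :
      ~ free_ch d (SRes c n v W) ->
      trans G (SRes d n v (swap_s c d W)) l W' ->
      trans G (SRes c n v W) l W'.

Definition config : Type := (env * sys)%type.

Definition is_config (C : config) : Prop := closed_sys (snd C).

Definition red (C C' : config) : Prop :=
  exists l, (forall c v, l <> LRcv c v) /\
            trans (fst C) (snd C) l (snd C') /\ fst C' = act_env l (fst C).

Definition red_star : config -> config -> Prop := clos_refl_trans config red.

Definition barb (C : config) (c : chan) : Prop := exposed (fst C) c.
Definition wbarb (C : config) (c : chan) : Prop :=
  exists C', red_star C C' /\ barb C' c.

Definition barb_preserving (R : config -> config -> Prop) : Prop :=
  forall C1 C2 c, R C1 C2 -> wbarb C1 c -> wbarb C2 c.

Definition reduction_closed (R : config -> config -> Prop) : Prop :=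
  forall C1 C2 C1', R C1 C2 -> red C1 C1' ->
    exists C2', red_star C2 C2' /\ R C1' C2'.

Definition contextual (R : config -> config -> Prop) : Prop :=
  forall G1 W1 G2 W2 W, R (G1, W1) (G2, W2) -> closed_sys W ->
    R (G1, SPar W1 W) (G2, SPar W2 W).

(* Reduction barbed congruence: the largest symmetric, barb preserving,
   reduction closed and contextual relation on configurations, i.e. the union
   of all such relations. *)
Definition rbc (C1 C2 : config) : Prop :=
  exists R : config -> config -> Prop,
    (forall D1 D2, R D1 D2 -> is_config D1 /\ is_config D2) /\
    (forall D1 D2, R D1 D2 -> R D2 D1) /\
    barb_preserving R /\ reduction_closed R /\ contextual R /\ R C1 C2.

Fixpoint wf_s (G : env) (W : sys) : Prop :=
  match W with
  | SProc _ => True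
  | SActRcv c _ _ => exposed G c
  | SPar W1 W2 => wf_s G W1 /\ wf_s G W2
  | SRes c n v W1 => wf_s (upd G c (n, v)) W1
  end.

Definition well_formed (C : config) : Prop := is_config C /\ wf_s (fst C) (snd C).

End CCCP.

(* Main.v *)
Require Import Defs.
From Stdlib Require Import List Arith PeanoNat Lia Relations.Relation_Operators
  FunctionalExtensionality Classical.
Import ListNotations.
Set Implicit Arguments.


Section S.
Variable Sg : signature.
Hypothesis Hdelta : forall v : val Sg, 1 <= delta Sg v.

Ltac eqbs := repeat match goal with |- context [?x =? ?y] => 
   match x with context [_ =? _] => fail 1 | _ => idtac end;
   destruct (Nat.eqb_spec x y) end.
Lemma swap_ch_inv a b c : swap_ch a b (swap_ch a b c) = c.
Proof. unfold swap_ch; eqbs; subst; congruence. Qed.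

Lemma swap_ch_inj a b c d : swap_ch a b c = swap_ch a b d -> c = d.
Proof. intro H. rewrite <- (swap_ch_inv a b c), <- (swap_ch_inv a b d), H. auto. Qed.

Lemma swap_eq a b c e : swap_ch a b c = e <-> c = swap_ch a b e.
Proof. split; intro H; subst; rewrite swap_ch_inv; auto. Qed.

Lemma ch_in_p_swap a b e (P : proc Sg) :
  ch_in_p e (swap_p a b P) <-> ch_in_p (swap_ch a b e) P.
Proof.
  induction P; simpl; try tauto.
  - rewrite swap_eq; tauto.
  - rewrite swap_eq; tauto.
  - destruct b0; simpl; [tauto|]. rewrite swap_eq; tauto.
Qed.

Lemma free_swap a b e (W : sys Sg) :
  free_ch e (swap_s a b W) <-> free_ch (swap_ch a b e) W.
Proof.
  revert e; induction W; intro e; simpl.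
  - apply ch_in_p_swap.
  - rewrite ch_in_p_swap, swap_eq; tauto.
  - rewrite IHW1, IHW2; tauto.
  - rewrite IHW, swap_eq; tauto.
Qed.

Lemma ch_in_sigma_n d k (P : proc Sg) : ch_in_p d (sigma_n k P) -> ch_in_p d P.
Proof. induction k; simpl; auto. Qed.

Lemma ch_in_subst_p d x w (P : proc Sg) : ch_in_p d (subst_p x w P) -> ch_in_p d P.
Proof.
  induction P; simpl; try tauto.
  - destruct (Nat.eqb x0 x); simpl; tauto.
  - destruct b; simpl; tauto.
Qed.

Lemma ch_in_subst_X d X R (P : proc Sg) :
  ch_in_p d (subst_X X R P) -> ch_in_p d P \/ ch_in_p d R.
Proof.
  induction P; simpl; try tauto.
  - destruct (Nat.eqb X0 X); simpl; tauto.
  - destruct (Nat.eqb X0 X); simpl; tauto.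
Qed.

Lemma FR d : forall G (W : sys Sg) l W', trans G W l W' -> ~ free_ch d W ->
  ~ free_ch d W' /\ (forall v, l <> LSnd Sg d v).
Proof.
  intros G W l W' Ht; induction Ht; simpl in *; intros Hf.
  - split. intro H'; apply Hf; right; eapply ch_in_sigma_n; eauto.
    intros v' E; inversion E; subst; tauto.
  - split; [tauto| intros v' E; discriminate].
  - split; [auto| intros v' E; discriminate].
  - destruct IHHt1; [tauto|]. destruct IHHt2; [tauto|]. split; [tauto|auto].
  - destruct IHHt1; [tauto|]. destruct IHHt2; [tauto|]. split; [tauto|auto].
  - destruct IHHt1; [tauto|]. destruct IHHt2; [tauto|]. split; [tauto|intros; discriminate].
  - split; [auto|intros; discriminate].
  - split; [auto|intros; discriminate].
  - split; [auto|intros; discriminate].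
  - split; [intro H'; apply Hf; right; eapply ch_in_subst_p; eauto|intros; discriminate].
  - split; [tauto|intros; discriminate].
  - split; [intros [H'|H']; apply Hf; [left;auto|right;left; eapply ch_in_subst_p; eauto]
           |intros; discriminate].
  - split; [auto|intros; discriminate].
  - split; [tauto|intros; discriminate].
  - split; [tauto|intros; discriminate].
  - destruct IHHt1; [tauto|]. destruct IHHt2; [tauto|]. split; [tauto|intros; discriminate].
  - destruct IHHt; [tauto|]. split; [tauto|intros; discriminate].
  - destruct IHHt; [tauto|]. split; [tauto|intros; discriminate].
  - apply IHHt. intro H'. destruct (ch_in_subst_X _ _ _ _ H'); auto.
  - apply IHHt; tauto.
  - apply IHHt; tauto.
  - destruct IHHt1; [tauto|]. destruct IHHt2; [tauto|]. split; [tauto|intros; discriminate].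
  - apply IHHt; tauto.
  - apply IHHt; tauto.
  - split; [|intros; discriminate].
    destruct (Nat.eq_dec c d); [subst; tauto|].
    destruct IHHt; [tauto|]. tauto.
  - destruct (Nat.eq_dec c d).
    + subst. split; [tauto|]. intros v' E; subst; apply H; simpl; auto.
    + destruct IHHt; [tauto|]. tauto.
  - apply IHHt. rewrite free_swap. unfold swap_ch.
    intros [Hd' Hw].
    destruct (Nat.eqb_spec d c).
    + subst. apply H. split; [auto| auto].
    + destruct (Nat.eqb_spec d d0); [subst; tauto|]. apply Hf; split; auto.
Qed.


Lemma wf_mono : forall (W : sys Sg) (G G' : env Sg),
  (forall e, free_ch e W -> exposed G e -> exposed G' e) -> wf_s G W -> wf_s G' W.
Proof.
  induction W; simpl; intros G G' H Hw; auto.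
  - destruct Hw; split; [eapply IHW1|eapply IHW2]; eauto.
  - eapply IHW; [|eauto]. intros e He. unfold upd, exposed. simpl.
    destruct (Nat.eqb_spec e c); auto. apply H; auto.
Qed.

Lemma tx_upd_exposed G c v e : exposed G e -> exposed (@tx_upd Sg G c v) e.
Proof.
  unfold tx_upd, exposed, upd; intro H.
  destruct (Nat.eqb_spec e c); auto; subst.
  destruct (Nat.eqb_spec (fst (G c)) 0); simpl; [contradiction|lia].
Qed.

Lemma tx_upd_exposed_c G c v : exposed (@tx_upd Sg G c v) c.
Proof.
  unfold tx_upd, exposed, upd. rewrite Nat.eqb_refl.
  destruct (Nat.eqb_spec (fst (G c)) 0); simpl; specialize (Hdelta v); lia.
Qed.

Lemma upd_upd (G : env Sg) c p q : upd (upd G c p) c q = upd G c q.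
Proof. extensionality e; unfold upd; destruct (e =? c); auto. Qed.

Lemma upd_same (G : env Sg) c : upd G c (G c) = G.
Proof. extensionality e; unfold upd; destruct (Nat.eqb_spec e c); subst; auto. Qed.

Lemma act_env_upd l (G : env Sg) c p : ~ ch_in_label c l ->
  act_env l (upd G c p) = upd (act_env l G) c (act_env l (upd G c p) c).
Proof.
  intro Hl. extensionality e. unfold upd at 2.
  destruct (Nat.eqb_spec e c); [subst; auto|].
  destruct l; simpl in *; unfold tx_upd, upd; simpl; auto.
  all: eqbs; subst; simpl in *; auto; try congruence.
Qed.

Lemma act_env_upd_snd (G : env Sg) c p w :
  act_env (LSnd Sg c w) (upd G c p) = upd G c (act_env (LSnd Sg c w) (upd G c p) c).
Proof.
  simpl. unfold tx_upd at 1. rewrite upd_upd. f_equal.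
  unfold tx_upd, upd. rewrite Nat.eqb_refl. auto.
Qed.

Lemma wf_swap : forall (W : sys Sg) (G : env Sg) a b,
  wf_s G W -> wf_s (fun e => G (swap_ch a b e)) (swap_s a b W).
Proof.
  induction W; simpl; intros G a b Hw; auto.
  - unfold exposed in *. rewrite swap_ch_inv. auto.
  - destruct Hw; split; auto.
  - specialize (IHW (upd G c (n, v)) a b Hw).
    eapply wf_mono; [|exact IHW]. intros e _. unfold exposed, upd.
    destruct (Nat.eqb_spec (swap_ch a b e) c); destruct (Nat.eqb_spec e (swap_ch a b c));
    subst; auto; exfalso; [apply n0; rewrite swap_ch_inv; auto| apply n0; rewrite swap_ch_inv; auto].
Qed.

Lemma pair_eta (A B : Type) (p : A * B) : (fst p, snd p) = p.
Proof. destruct p; auto. Qed.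

Lemma WFP : forall G (W : sys Sg) l W', trans G W l W' -> wf_s G W ->
  wf_s (act_env l G) W'.
Proof.
  intros G W l W' Ht; induction Ht; simpl in *; intros Hw; auto.
  - apply tx_upd_exposed_c.
  - eapply wf_mono; [|eauto]. intros; apply tx_upd_exposed; auto.
  - destruct Hw; split; auto.
  - destruct Hw; split; auto.
  - destruct Hw; split; auto.
  - unfold exposed; simpl; lia.
  - destruct Hw; split; auto.
  - destruct Hw; split; auto.
  - destruct Hw; split; auto.
  - rewrite pair_eta. pose proof (act_env_upd_snd G c (n,v) w) as E; simpl in E; rewrite <- E; auto.
  - rewrite pair_eta. rewrite <- act_env_upd; auto.
  - apply IHHt. simpl.
    assert (Hw' := wf_swap _ _ c d Hw).
    eapply wf_mono; [|exact Hw'].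
    intros e He. rewrite free_swap in He. unfold exposed, upd.
    destruct (Nat.eqb_spec c d).
    + subst. unfold swap_ch in *. destruct (Nat.eqb_spec e d); subst; auto.
      rewrite Nat.eqb_refl; auto.
      destruct (Nat.eqb_spec e d); [congruence|]. auto.
    + assert (~ free_ch d W) by (intro; apply H; simpl; auto).
      unfold swap_ch in *.
      repeat match goal with 
        | H : context [?x =? ?y] |- _ => destruct (Nat.eqb_spec x y)
        | |- context [?x =? ?y] => destruct (Nat.eqb_spec x y) end;
      subst; simpl in *; auto; try congruence.
Qed.

End S.


Section S.
Variable Sg : signature.

Lemma closed_e_mono xs ys : incl xs ys -> forall e : exp Sg, closed_e xs e -> closed_e ys e.
Proof.
  intros Hi. fix IH 1. intros e; destruct e as [v|y|f es]; simpl; auto.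
  induction es; simpl; auto. intros [H1 H2]; split; [exact (IH a H1)|exact (IHes H2)].
Qed.

Lemma eval_closed : forall e : exp Sg, closed_e [] e -> exists v, eval e = Some v.
Proof.
  fix IH 1. intros e; destruct e as [v|y|f es]; simpl; eauto.
  - intros [].
  - match goal with |- ?A es -> exists v, match ?F es with _ => _ end = _ =>
      assert (HF: forall l, A l -> exists vs, F l = Some vs) end.
    { induction l; simpl; eauto. intros [H1 H2].
      destruct (IH a H1) as [v Hv]. destruct (IHl H2) as [vs Hvs].
      rewrite Hv, Hvs; eauto. }
    intro Ha; destruct (HF es Ha) as [vs Hvs]; rewrite Hvs; eauto.
Qed.

Lemma closed_p_mono : forall (P : proc Sg) xs ys Xs Ys, incl xs ys -> incl Xs Ys ->
  closed_p xs Xs P -> closed_p ys Ys P.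
Proof.
  induction P; simpl; intros xs ys Xs Ys H1 H2 Hc; try tauto.
  - destruct Hc; split; [eapply closed_e_mono|eapply IHP]; eauto.
  - destruct Hc; split; [eapply IHP1|eapply IHP2]; eauto.
    intros a [Ha|Ha]; [left|right]; auto.
  - eapply IHP; eauto.
  - eapply IHP; eauto.
  - destruct Hc; split; [eapply IHP1|eapply IHP2]; eauto.
  - destruct Hc as [Hb [Hp Hq]]; split; [|split; [eapply IHP1|eapply IHP2]; eauto].
    destruct b; simpl in *; auto. destruct Hb; split; eapply closed_e_mono; eauto.
  - auto.
  - eapply IHP; eauto. intros a [Ha|Ha]; [left|right]; auto.
Qed.

Lemma closed_subst_X : forall (P : proc Sg) X R xs Xs, closed_p xs (X :: Xs) P ->
  closed_p [] [] R -> closed_p xs Xs (subst_X X R P).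
Proof.
  induction P; simpl; intros X' R xs Xs Hc HR; try tauto.
  - destruct Hc; split; auto.
  - destruct Hc; split; auto.
  - auto. - auto.
  - destruct Hc; split; auto.
  - destruct Hc as [? [? ?]]; split; auto.
  - destruct (Nat.eqb_spec X X'); subst.
    + eapply closed_p_mono; [| |exact HR]; intros a [].
    + destruct Hc; [congruence|auto].
  - destruct (Nat.eqb_spec X X'); subst; simpl.
    + eapply closed_p_mono; [| |exact Hc]; [intros a; auto|].
      intros a [Ha|[Ha|Ha]]; subst; simpl; auto.
    + apply IHP; auto. eapply closed_p_mono; [| |exact Hc]; [intros a; auto|].
      intros a [Ha|[Ha|Ha]]; subst; simpl; auto.
Qed.

Lemma unguarded_closed : forall (P : proc Sg) Y xs Xs, closed_p xs Xs P ->
  unguarded Y P -> In Y Xs.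
Proof.
  induction P; simpl; intros Y xs Xs Hc Hu; try tauto.
  - eauto.
  - destruct Hc; destruct Hu; eauto.
  - subst; auto.
  - destruct Hu. destruct (IHP _ _ _ Hc H0); [congruence|auto].
Qed.

Lemma unguarded_subst : forall (P : proc Sg) X R Y,
  unguarded Y (subst_X X R P) -> unguarded Y P \/ unguarded Y R.
Proof.
  induction P; simpl; intros X' R Y Hu; try tauto.
  - eauto.
  - destruct Hu as [Hu|Hu]; [destruct (IHP1 _ _ _ Hu)|destruct (IHP2 _ _ _ Hu)]; tauto.
  - destruct (Nat.eqb X X'); simpl in *; tauto.
  - destruct (Nat.eqb X X'); simpl in *; [tauto|].
    destruct Hu; destruct (IHP _ _ _ H0); tauto.
Qed.

Lemma guarded_subst : forall (P : proc Sg) X R, guarded_rec P -> guarded_rec R ->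
  closed_p [] [] R -> guarded_rec (subst_X X R P).
Proof.
  induction P; simpl; intros X' R Hg HR Hc.
  all: try (destruct Hg; split; eauto; fail).
  all: eauto.
  - destruct (Nat.eqb X X'); simpl; auto.
  - destruct (Nat.eqb X X'); simpl; auto.
    destruct Hg; split; auto. intro Hu. destruct (unguarded_subst _ _ _ _ Hu); auto.
    destruct (unguarded_closed _ _ _ _ Hc H1).
Qed.

Fixpoint idm (P : proc Sg) : nat :=
  match P with
  | PSnd _ _ _ | PRcv _ _ _ _ | PIf _ _ _ => 1
  | PTau P1 => S (idm P1)
  | PSum P1 Q1 => S (idm P1 + idm Q1)
  | PFix _ P1 => S (idm P1)
  | _ => 0
  end.

Lemma idm_subst : forall (P : proc Sg) X R, ~ unguarded X P -> idm (subst_X X R P) = idm P.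
Proof.
  induction P; simpl; intros X' R Hu; auto.
  - rewrite IHP1, IHP2; auto.
  - destruct (Nat.eqb_spec X X'); [congruence|auto].
  - destruct (Nat.eqb_spec X X'); simpl; auto.
    rewrite IHP; auto.
Qed.

End S.


Section S.
Variable Sg : signature.
Hypothesis Hdelta : forall v : val Sg, 1 <= delta Sg v.

Inductive RdyP (G : env Sg) : proc Sg -> Prop :=
| rNil : RdyP G (PNil Sg)
| rSig P : RdyP G (PSigma P)
| rRcv c x P Q : idle G c -> RdyP G (PRcv c x P Q)
| rSum P Q : RdyP G P -> RdyP G Q -> RdyP G (PSum P Q)
| rFix X P : RdyP G (subst_X X (PFix X P) P) -> RdyP G (PFix X P).

Fixpoint Rdy (G : env Sg) (W : sys Sg) : Prop :=
  match W with
  | SProc P => RdyP G P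
  | SActRcv c _ _ => exposed G c
  | SPar W1 W2 => Rdy G W1 /\ Rdy G W2
  | SRes c n v W1 => Rdy (upd G c (n, v)) W1
  end.

Lemma RdyP_sig G P : RdyP G P -> exists P', trans G (SProc P) (LSig Sg) (SProc P').
Proof.
  induction 1.
  - eexists; constructor.
  - eexists; constructor.
  - eexists; constructor; auto.
  - destruct IHRdyP1, IHRdyP2; eexists; apply tSumTime; eauto.
  - destruct IHRdyP; eexists; apply tRec; eauto.
Qed.

Lemma Rdy_sig : forall W G, Rdy G W -> exists W', trans G W (LSig Sg) W'.
Proof.
  induction W; simpl; intros G H.
  - destruct (RdyP_sig H); eauto.
  - unfold exposed in H. destruct (Nat.eq_dec (fst (G c)) 1).
    + eexists; apply tEndRcv; auto.
    + eexists; apply tActRcv; lia.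
  - destruct H. destruct (IHW1 _ H), (IHW2 _ H0). eexists; apply tTimePar; eauto.
  - destruct (IHW _ H). eexists; apply tResV; eauto.
Qed.

Inductive Path : env Sg -> sys Sg -> Prop :=
| PaRdy G W : Rdy G W -> Path G W
| PaStep G W l W' : (l = LTau Sg \/ exists c v, l = LSnd Sg c v) ->
    trans G W l W' -> Path (act_env l G) W' -> Path G W.

Inductive rcvpath (c : chan) : proc Sg -> nat -> Prop :=
| rpR x P Q : rcvpath c (PRcv c x P Q) 0
| rpL P Q n : rcvpath c P n -> rcvpath c (PSum P Q) (S n)
| rpRt P Q n : rcvpath c Q n -> rcvpath c (PSum P Q) (S n)
| rpF X P n : rcvpath c P n -> rcvpath c (PFix X P) (S n).

Lemma rcv_p_path c : forall P : proc Sg, rcv_p P c -> exists n, rcvpath c P n.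
Proof.
  induction P; simpl; intros H; try tauto.
  - subst; eexists; constructor.
  - destruct H as [H|H]; [destruct (IHP1 H)|destruct (IHP2 H)]; eexists;
      [apply rpL|apply rpRt]; eauto.
  - destruct (IHP H); eexists; apply rpF; eauto.
Qed.

Lemma rcvpath_rcv_p c P n : rcvpath c P n -> rcv_p P c.
Proof. induction 1; simpl; auto. Qed.

Lemma rcvpath_subst c X R P n : rcvpath c P n -> rcvpath c (subst_X X R P) n.
Proof.
  induction 1; simpl.
  - constructor.
  - constructor; auto.
  - apply rpRt; auto.
  - destruct (Nat.eqb X0 X); constructor; auto.
Qed.

Lemma rcv_p_subst c X R : forall P : proc Sg,
  rcv_p (subst_X X R P) c -> rcv_p P c \/ rcv_p R c.
Proof.
  induction P; simpl; intros H; try tauto.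
  all: destruct (Nat.eqb X0 X); simpl in *; tauto.
Qed.

Lemma rcvpath_trans G c v : forall n P, rcvpath c P n -> idle G c ->
  exists x P'', trans G (SProc P) (LRcv Sg c v) (SActRcv c x P'') /\
    (closed_p [] [] P -> guarded_rec P -> closed_p [x] [] P'' /\ guarded_rec P'').
Proof.
  induction n; intros P Hp Hi; inversion Hp; subst.
  - exists x, P0. split; [constructor; auto|]. simpl; tauto.
  - destruct (IHn _ H1 Hi) as [x [P'' [Ht Hc]]]. exists x, P''. split.
    + apply tSumRcvL; auto. split; auto. simpl. eapply rcvpath_rcv_p; eauto.
    + simpl; intros [] []; auto.
  - destruct (IHn _ H1 Hi) as [x [P'' [Ht Hc]]]. exists x, P''. split.
    + apply tSumRcvR; auto. split; auto. simpl. eapply rcvpath_rcv_p; eauto.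
    + simpl; intros [] []; auto.
  - destruct (IHn (subst_X X (PFix X P0) P0)) as [x [P'' [Ht Hc]]]; auto.
    + apply rcvpath_subst; auto.
    + exists x, P''. split.
      * apply tRec; auto.
      * simpl; intros Hc1 [Hg1 Hg2]. apply Hc.
        -- apply closed_subst_X; auto.
        -- apply guarded_subst; simpl; auto.
Qed.

Lemma RdyP_rcvign G c v : forall P, RdyP G P -> ~ (idle G c /\ rcv_p P c) ->
  RdyP (tx_upd G c v) P.
Proof.
  induction 1; simpl; intros Hn.
  - constructor. - constructor.
  - constructor. unfold idle, tx_upd, upd in *.
    destruct (Nat.eqb_spec c0 c); [subst; tauto|auto].
  - constructor; [apply IHRdyP1|apply IHRdyP2]; tauto.
  - constructor. apply IHRdyP. intros [Hi Hr].
    destruct (rcv_p_subst _ _ _ _ Hr); simpl in *; tauto.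
Qed.

Fixpoint ssize (W : sys Sg) : nat :=
  match W with
  | SProc _ | SActRcv _ _ _ => 1
  | SPar W1 W2 => S (ssize W1 + ssize W2)
  | SRes _ _ _ W1 => S (ssize W1)
  end.

Lemma rcv_ex c v : forall (W : sys Sg) G, exists W', trans G W (LRcv Sg c v) W' /\
  ssize W' = ssize W /\ (Rdy G W -> Rdy (tx_upd G c v) W') /\
  (closed_s [] W -> closed_s [] W').
Proof.
  induction W; intros G.
  - destruct (classic (idle G c /\ rcv_p P c)) as [[Hi Hr]|Hn].
    + destruct (rcv_p_path _ _ Hr) as [n Hn].
      destruct (rcvpath_trans v Hn Hi) as [x [P'' [Ht Hc]]].
      exists (SActRcv c x P''). split; [auto|]. split; [auto|]. split.
      * intros _; simpl; apply tx_upd_exposed_c; auto.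
      * simpl; intros []; auto.
    + exists (SProc P). split; [apply tRcvIgn; unfold rcv_conf; simpl; auto|].
      split; [auto|]. split; [|auto]. simpl; intros; apply RdyP_rcvign; auto.
  - exists (SActRcv c0 x P). split; [apply tRcvIgn; unfold rcv_conf; simpl; tauto|].
    split; [auto|]. split; [|auto]. simpl; apply tx_upd_exposed.
  - destruct (IHW1 G) as [W1' [H1 [H2 [H3 H4]]]].
    destruct (IHW2 G) as [W2' [H1' [H2' [H3' H4']]]].
    exists (SPar W1' W2'). split; [apply tRcvPar; auto|]. simpl. split; [lia|].
    split; intros []; auto.
  - destruct (Nat.eq_dec c0 c).
    + subst. exists (SRes c n v0 W). split; [apply tRcvIgn; unfold rcv_conf; simpl; tauto|].
      split; [auto|]. split; [|auto]. simpl. unfold tx_upd. rewrite upd_upd. auto.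
    + destruct (IHW (upd G c0 (n, v0))) as [W1' [H1 [H2 [H3 H4]]]].
      eexists. split; [apply tResV; [simpl; auto|exact H1]|].
      simpl. split; [auto|]. split; [|auto].
      intros HR. rewrite pair_eta.
      pose proof (@act_env_upd Sg (LRcv Sg c v) G c0 (n, v0)) as E. simpl in E.
      rewrite <- E; auto.
Qed.

End S.


Section S.
Variable Sg : signature.
Hypothesis Hdelta : forall v : val Sg, 1 <= delta Sg v.

Lemma sum_path G (P Q : proc Sg) : Path G (SProc P) -> Path G (SProc Q) -> Path G (SProc (PSum P Q)).
Proof.
  intros HP HQ. inversion HP; subst.
  - inversion HQ; subst.
    + apply PaRdy. simpl in *. constructor; auto.
    + eapply PaStep; [eauto| apply tSumR; eauto |auto].
  - eapply PaStep; [eauto| apply tSumL; eauto |auto].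
Qed.

Lemma TP_proc : forall n (P : proc Sg) G, idm P <= n -> closed_p [] [] P -> guarded_rec P ->
  Path G (SProc P).
Proof.
  induction n; intros P G Hn Hc Hg; destruct P; simpl in *; try lia;
    try (apply PaRdy; simpl; constructor; fail).
  - destruct Hc as [He Hc]. destruct (eval_closed _ He) as [v Hv].
    eapply PaStep; [right; eauto|apply tSnd; eauto|].
    apply PaRdy. simpl. specialize (Hdelta v).
    destruct (delta Sg v); [lia|]. simpl; constructor.
  - destruct (classic (idle G c)).
    + apply PaRdy; constructor; auto.
    + eapply PaStep; [left; eauto|apply tRcvLate; auto|]. apply PaRdy; simpl; auto.
  - eapply PaStep; [left; eauto|apply tTau|]. apply IHn; auto; lia.
  - destruct Hc, Hg. apply sum_path; apply IHn; auto; lia.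
  - destruct (classic (beval G b)).
    + eapply PaStep; [left; eauto|apply tThen; auto|]. apply PaRdy; constructor.
    + eapply PaStep; [left; eauto|apply tElse; auto|]. apply PaRdy; constructor.
  - destruct Hg as [Hu Hg].
    assert (HU : Path G (SProc (subst_X X (PFix X P) P))).
    { apply IHn.
      - rewrite idm_subst; auto; lia.
      - apply closed_subst_X; auto.
      - apply guarded_subst; simpl; auto. }
    inversion HU; subst.
    + apply PaRdy; simpl in *; constructor; auto.
    + eapply PaStep; [eauto|apply tRec; eauto|auto].
Qed.

Lemma par_path2 : forall G (W2 : sys Sg), Path G W2 -> forall W1, Rdy G W1 ->
  Path G (SPar W1 W2).
Proof.
  induction 1; intros W1 HR.
  - apply PaRdy; simpl; auto.
  - destruct H as [H|[c [v H]]]; subst.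
    + eapply PaStep; [left; eauto|apply tTauParR; eauto|]. apply IHPath; auto.
    + destruct (rcv_ex Hdelta c v W1 G) as [W1' [Ht [_ [HR' _]]]].
      eapply PaStep; [right; eauto|eapply tSyncR; eauto|]. apply IHPath; auto.
Qed.

Lemma par_path1 : forall G (W1 : sys Sg), Path G W1 -> forall W2,
  closed_s [] W2 -> wf_s G W2 ->
  (forall (G' : env Sg) W2', ssize W2' = ssize W2 -> closed_s [] W2' -> wf_s G' W2' -> Path G' W2') ->
  Path G (SPar W1 W2).
Proof.
  induction 1; intros W2 Hc Hw IH.
  - apply par_path2; auto.
  - destruct H as [H|[c [v H]]]; subst.
    + eapply PaStep; [left; eauto|apply tTauParL; eauto|]. apply IHPath; auto.
    + destruct (rcv_ex Hdelta c v W2 G) as [W2' [Ht [Hs [_ Hc']]]].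
      eapply PaStep; [right; eauto|eapply tSyncL; eauto|]. apply IHPath; auto.
      * apply (WFP Hdelta Ht Hw).
      * intros; apply IH; auto; lia.
Qed.

Lemma res_path : forall E (W : sys Sg), Path E W -> forall G c n v, E = upd G c (n, v) ->
  Path G (SRes c n v W).
Proof.
  induction 1; intros G0 c0 n0 v0 HE; subst.
  - apply PaRdy; simpl; auto.
  - destruct (classic (exists w, l = LSnd Sg c0 w)) as [[w Hw]|Hn].
    + subst. eapply PaStep; [left; eauto|apply tResI; eauto|].
      simpl act_env at 1. apply IHPath. rewrite pair_eta.
      apply act_env_upd_snd.
    + assert (~ ch_in_label c0 l).
      { destruct H as [H|[c [v H]]]; subst; simpl; auto. intro; subst; eauto. }
      eapply PaStep; [eauto|apply tResV; eauto|].
      apply IHPath. rewrite pair_eta. apply act_env_upd; auto.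
Qed.

Lemma TP : forall n (W : sys Sg) G, ssize W <= n -> closed_s [] W -> wf_s G W -> Path G W.
Proof.
  induction n; intros W G Hn Hc Hw; destruct W; simpl in *; try lia.
  - destruct Hc; eapply TP_proc; eauto.
  - apply PaRdy; simpl; auto.
  - destruct Hc, Hw. apply par_path1; auto.
    + apply IHn; auto; lia.
    + intros; apply IHn; auto; lia.
  - eapply res_path; [|reflexivity]. apply IHn; auto; lia.
Qed.

End S.


Section S.
Variable Sg : signature.
Hypothesis Hdelta : forall v : val Sg, 1 <= delta Sg v.
Variables (c d : chan).

Definition Sd : proc Sg := PFix 0 (PSnd d (EVal Sg (err Sg)) (PVar Sg 0)).
Definition S1 : proc Sg := PSnd d (EVal Sg (err Sg)) Sd.
Definition Tc : proc Sg := PSum (PIf (CExp Sg c) Sd (PNil Sg)) Sd.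

Definition isrcv (l : label Sg) := exists e v, l = LRcv Sg e v.

Lemma trans_S1 G l W : trans G (SProc S1) l W ->
  (l = LSnd Sg d (err Sg) /\ W = SProc (sigma_n (delta Sg (err Sg)) Sd)) \/
  (isrcv l /\ W = SProc S1).
Proof.
  intro H; inversion H; subst.
  - left. match goal with E : eval _ = Some _ |- _ => simpl in E; inversion E; subst end. auto.
  - right. split; [do 2 eexists; eauto|auto].
Qed.

Lemma trans_S G l W : trans G (SProc Sd) l W ->
  (l = LSnd Sg d (err Sg) /\ W = SProc (sigma_n (delta Sg (err Sg)) Sd)) \/
  (isrcv l /\ (W = SProc Sd \/ W = SProc S1)).
Proof.
  intro H; inversion H; subst.
  - right. split; [do 2 eexists; eauto|auto].
  - match goal with E : trans _ _ _ _ |- _ => simpl in E; fold Sd in E; fold S1 in E;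
      apply trans_S1 in E; destruct E as [[]|[]]; subst; auto end.
Qed.

Lemma trans_sig G P l W : trans G (SProc (@PSigma Sg P)) l W ->
  (l = LSig Sg /\ W = SProc P) \/ (isrcv l /\ W = SProc (PSigma P)).
Proof.
  intro H; inversion H; subst; auto.
  right; split; [do 2 eexists; eauto|auto].
Qed.

Lemma trans_T G l W : exposed G c -> trans G (SProc Tc) l W ->
  (l = LTau Sg /\ W = SProc (PSigma Sd)) \/
  (l = LSnd Sg d (err Sg) /\ W = SProc (sigma_n (delta Sg (err Sg)) Sd)) \/
  (isrcv l /\ W = SProc Tc).
Proof.
  intros He H; inversion H; subst.
  - right; right. split; [do 2 eexists; eauto|auto].
  - match goal with Hd : _ \/ _, E : trans _ (SProc (PIf _ _ _)) _ _ |- _ =>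
      inversion E; subst; [destruct Hd as [|[? [? ?]]]; discriminate|auto|exfalso; auto] end.
  - match goal with Hd : _ \/ _, E : trans _ (SProc Sd) _ _ |- _ =>
      apply trans_S in E; destruct E as [[]|[[? [? ?]] _]]; subst; auto;
      destruct Hd as [|[? [? ?]]]; discriminate end.
  - match goal with E : trans _ (SProc (PIf _ _ _)) _ _ |- _ => inversion E end.
  - match goal with E : rcv_conf _ _ _ |- _ => destruct E as [_ []] end.
  - match goal with E : rcv_conf _ _ _ |- _ => destruct E as [_ []] end.
Qed.

Definition St (G : env Sg) (X : sys Sg) : Prop :=
  (X = SProc Tc /\ exposed G c) \/
  (exists j, X = SProc (sigma_n j Sd) /\ j <= fst (G d)) \/
  X = SProc S1 \/ X = SProc (PSigma Sd).

Lemma tx_upd_ge (G : env Sg) e v e' : fst (G e') <= fst (tx_upd G e v e').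
Proof.
  unfold tx_upd, upd. destruct (Nat.eqb_spec e' e); auto. subst.
  destruct (Nat.eqb_spec (fst (G e)) 0); simpl; lia.
Qed.

Lemma tx_upd_d (G : env Sg) v : delta Sg v <= fst (tx_upd G d v d).
Proof.
  unfold tx_upd, upd. rewrite Nat.eqb_refl.
  destruct (Nat.eqb_spec (fst (G d)) 0); simpl; lia.
Qed.

Lemma X_step G X l X' : St G X -> trans G X l X' -> St (act_env l G) X'.
Proof.
  intros Hs Ht. destruct Hs as [[? He]|[[j [? Hj]]|[?|?]]]; subst.
  - apply trans_T in Ht; auto. destruct Ht as [[]|[[]|[[e [v ?]] ?]]]; subst.
    + right; right; right; auto.
    + right; left. eexists; split; eauto. apply tx_upd_d.
    + left. split; auto. apply tx_upd_exposed; auto.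
  - destruct j as [|j]; simpl in Ht.
    + apply trans_S in Ht. destruct Ht as [[]|[[e [v ?]] [?|?]]]; subst.
      * right; left. eexists; split; eauto. apply tx_upd_d.
      * right; left. exists 0; split; auto; lia.
      * right; right; left; auto.
    + apply trans_sig in Ht. destruct Ht as [[]|[[e [v ?]] ?]]; subst.
      * right; left. exists j; split; auto. simpl. lia.
      * right; left. exists (S j); split; auto. simpl.
        pose proof (tx_upd_ge G e v d); lia.
  - apply trans_S1 in Ht. destruct Ht as [[]|[[e [v ?]] ?]]; subst.
    + right; left. eexists; split; eauto. apply tx_upd_d.
    + right; right; left; auto.
  - apply trans_sig in Ht. destruct Ht as [[]|[[e [v ?]] ?]]; subst.
    + right; left. exists 0; split; auto; lia.
    + right; right; right; auto.
Qed.

Definition Inv (G : env Sg) (Y : sys Sg) : Prop :=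
  exists W X, Y = SPar W X /\ St G X.

Lemma Inv_step G Y l Y' : Inv G Y -> trans G Y l Y' -> ~ isrcv l -> Inv (act_env l G) Y'.
Proof.
  intros [W [X [? Hs]]] Ht Hl; subst.
  inversion Ht; subst.
  all: try (exfalso; apply Hl; do 2 eexists; eauto; fail).
  all: try (match goal with E : trans _ ?Z _ ?Z' |- _ =>
        match type of Hs with St _ Z => 
          do 2 eexists; split; [reflexivity|]; exact (X_step Hs E) end end).
  all: do 2 eexists; split; [reflexivity|]; simpl; auto.
Qed.

End S.


Section S.
Variable Sg : signature.
Hypothesis Hdelta : forall v : val Sg, 1 <= delta Sg v.
Variables (c d : chan).

Lemma wbarb_prepend (C C' : config Sg) e : red C C' -> wbarb C' e -> wbarb C e.
Proof.
  intros Hr [C'' [H1 H2]]. exists C''. split; auto. eapply rt_trans; [apply rt_step|]; eauto.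
Qed.

Lemma send_red G (W X X' : sys Sg) : trans G X (LSnd Sg d (err Sg)) X' ->
  wbarb (G, SPar W X) d.
Proof.
  intros Ht. destruct (rcv_ex Hdelta d (err Sg) W G) as [W' [Hw _]].
  exists (tx_upd G d (err Sg), SPar W' X'). split.
  - apply rt_step. exists (LSnd Sg d (err Sg)). split; [intros; discriminate|].
    split; simpl; auto. eapply tSyncR; eauto.
  - unfold barb; simpl. apply tx_upd_exposed_c; auto.
Qed.

Lemma Sd_send G : trans G (SProc (Sd Sg d)) (LSnd Sg d (err Sg))
  (SProc (sigma_n (delta Sg (err Sg)) (Sd Sg d))).
Proof. unfold Sd at 1. apply tRec. simpl. apply tSnd. reflexivity. Qed.

Lemma wb_direct G W X : St c d G X -> X <> SProc (PSigma (Sd Sg d)) ->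
  wbarb (G, SPar W X) d.
Proof.
  intros Hs Hne. destruct Hs as [[? He]|[[j [? Hj]]|[?|?]]]; subst.
  - eapply send_red. unfold Tc. apply tSumR; [right; eauto|]. apply Sd_send.
  - destruct j as [|j].
    + eapply send_red. apply Sd_send.
    + exists (G, SPar W (SProc (sigma_n (S j) (Sd Sg d)))). split; [apply rt_refl|].
      unfold barb, exposed; simpl; lia.
  - eapply send_red. unfold S1. apply tSnd. reflexivity.
  - congruence.
Qed.

Lemma path_wbarb : forall (G : env Sg) Y, Path G Y -> Inv c d G Y -> wbarb (G, Y) d.
Proof.
  induction 1; intros HI.
  - destruct HI as [W0 [X [? Hs]]]; subst.
    destruct (classic (X = SProc (PSigma (Sd Sg d)))) as [?|Hne]; [|apply wb_direct; auto].
    subst. destruct (Rdy_sig _ _ H) as [Y' Ht].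
    inversion Ht; subst.
    match goal with E : trans _ (SProc (PSigma _)) _ _ |- _ =>
      apply trans_sig in E; destruct E as [[_ ?]|[[? [? ?]] _]]; [subst|discriminate] end.
    eapply wbarb_prepend with (C' := (act_env (LSig Sg) G, SPar W1' (SProc (Sd Sg d)))).
    + exists (LSig Sg). split; [intros; discriminate|]. split; [simpl; eauto|reflexivity].
    + simpl. eapply send_red. apply Sd_send.
  - eapply wbarb_prepend with (C' := (act_env l G, W')).
    + exists l. split; [|split; simpl; eauto].
      intros c0 v0 E; subst; destruct H as [|[? [? ?]]]; discriminate.
    + apply IHPath. eapply Inv_step; eauto.
      intros [? [? ?]]; subst; destruct H as [|[? [? ?]]]; discriminate.
Qed.

Lemma red_star_inv (P : config Sg -> Prop) :
  (forall C C', red C C' -> P C -> P C') ->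
  forall C C', red_star C C' -> P C -> P C'.
Proof. intros Hp C C' H; induction H; eauto. Qed.

Lemma nobarb (W : sys Sg) G : ~ free_ch d W -> idle G d -> ~ wbarb (G, W) d.
Proof.
  intros Hf Hi [C' [Hr Hb]].
  assert (H : ~ free_ch d (snd C') /\ idle (fst C') d).
  { apply (red_star_inv (fun C => ~ free_ch d (snd C) /\ idle (fst C) d)) with (C := (G, W));
      [|exact Hr|simpl; auto].
    intros [G0 W0] [G1 W1] [l [Hl [Ht He]]] [Hf0 Hi0]; simpl in *; subst.
    destruct (FR _ Ht Hf0) as [Hf1 Hs]. split; auto.
    unfold idle in *. destruct l; simpl; auto.
    - unfold tx_upd, upd. destruct (Nat.eqb_spec d c0); auto. subst. exfalso; eapply Hs; eauto.
    - exfalso; eapply Hl; eauto.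
    - lia. }
  destruct H. unfold barb in Hb. contradiction.
Qed.

Definition P1 (m : nat) (C : config Sg) : Prop :=
  wf_s (fst C) (snd C) /\ ~ free_ch d (snd C) /\ fst (fst C d) <= m.

Lemma P1_red m C C' : red C C' -> P1 m C -> P1 m C'.
Proof.
  destruct C as [G0 W0], C' as [G1 W1].
  intros [l [Hl [Ht He]]] [Hw [Hf Hm]]; simpl in *; subst.
  destruct (FR _ Ht Hf) as [Hf1 Hs]. split; [apply (WFP Hdelta Ht Hw)|]. split; auto.
  destruct l; simpl; auto.
  - unfold tx_upd, upd. destruct (Nat.eqb_spec d c0); auto. subst. exfalso; eapply Hs; eauto.
  - exfalso; eapply Hl; eauto.
  - lia.
Qed.

Lemma follow_path : forall (G : env Sg) W, Path G W -> forall m, P1 m (G, W) ->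
  exists C', red_star (G, W) C' /\ P1 (m - 1) C'.
Proof.
  induction 1; intros m HP.
  - destruct (Rdy_sig _ _ H) as [W' Ht].
    exists (act_env (LSig Sg) G, W'). split.
    + apply rt_step. exists (LSig Sg). split; [intros; discriminate|]. simpl; auto.
    + destruct HP as [Hw [Hf Hm]]. split; [apply (WFP Hdelta Ht Hw)|].
      split; [apply (FR _ Ht Hf)|]. simpl in *. lia.
  - assert (Hr : red (G, W) (act_env l G, W')).
    { exists l. split; [|simpl; auto].
      intros c0 v0 E; subst; destruct H as [|[? [? ?]]]; discriminate. }
    destruct (IHPath m (P1_red Hr HP)) as [C' [Hq1 Hq2]].
    exists C'; split; auto. eapply rt_trans; [apply rt_step|]; eauto.
Qed.

Lemma rc_star (R : config Sg -> config Sg -> Prop) : reduction_closed R ->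
  forall C1 C1', red_star C1 C1' -> forall C2, R C1 C2 ->
  exists C2', red_star C2 C2' /\ R C1' C2'.
Proof.
  intros Hrc C1 C1' H; induction H; intros C2 HR.
  - destruct (Hrc _ _ _ HR H) as [C2' []]; eauto.
  - exists C2; split; [apply rt_refl|auto].
  - destruct (IHclos_refl_trans1 _ HR) as [C2' [H1 H2]].
    destruct (IHclos_refl_trans2 _ H2) as [C2'' [H3 H4]].
    exists C2''; split; auto. eapply rt_trans; eauto.
Qed.

Lemma G1_iter (R : config Sg -> config Sg -> Prop) :
  (forall D1 D2, R D1 D2 -> is_config D1 /\ is_config D2) -> reduction_closed R ->
  forall k C1 C2, R C1 C2 -> P1 k C1 ->
  exists C1' C2', R C1' C2' /\ red_star C2 C2' /\ ~ free_ch d (snd C1') /\ idle (fst C1') d.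
Proof.
  intros Hcf Hrc. induction k; intros C1 C2 HR HP.
  - exists C1, C2. destruct HP as [_ [Hf Hm]]. split; [auto|split; [apply rt_refl|]].
    split; auto. unfold idle; lia.
  - destruct C1 as [G W].
    assert (Hp : Path G W).
    { destruct (Hcf _ _ HR) as [Hc _]. destruct HP as [Hw _].
      eapply TP; eauto. }
    destruct (follow_path Hp HP) as [C1' [H1 H2]].
    destruct (rc_star Hrc H1 _ HR) as [C2' [H3 H4]].
    replace (S k - 1) with k in H2 by lia.
    destruct (IHk _ _ H4 H2) as [C1'' [C2'' [H5 [H6 H7]]]].
    exists C1'', C2''. split; auto. split; [eapply rt_trans; eauto|auto].
Qed.

End S.


Lemma chp_bound (Sg : signature) : forall P : proc Sg, exists N, forall ch, ch_in_p ch P -> ch < N.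
Proof.
  induction P; simpl.
  - destruct IHP as [N HN]. exists (N + c + 1). intros ch [H|H]; [lia|apply HN in H; lia].
  - destruct IHP1 as [N1 H1], IHP2 as [N2 H2]. exists (N1 + N2 + c + 1).
    intros ch [H|[H|H]]; [lia|apply H1 in H; lia|apply H2 in H; lia].
  - auto. - auto.
  - destruct IHP1 as [N1 H1], IHP2 as [N2 H2]. exists (N1 + N2).
    intros ch [H|H]; [apply H1 in H; lia|apply H2 in H; lia].
  - destruct IHP1 as [N1 H1], IHP2 as [N2 H2].
    destruct b as [e1 e2|c0].
    + exists (N1 + N2). simpl. intros ch [H|[H|H]]; [tauto|apply H1 in H; lia|apply H2 in H; lia].
    + exists (N1 + N2 + c0 + 1). simpl. intros ch [H|[H|H]]; [lia|apply H1 in H; lia|apply H2 in H; lia].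
  - exists 0; tauto.
  - exists 0; tauto.
  - auto.
Qed.

Lemma free_bound (Sg : signature) : forall W : sys Sg, exists N, forall ch, free_ch ch W -> ch < N.
Proof.
  induction W; simpl.
  - apply chp_bound.
  - destruct (chp_bound P) as [N HN]. exists (N + c + 1). intros ch [H|H]; [lia|apply HN in H; lia].
  - destruct IHW1 as [N1 H1], IHW2 as [N2 H2]. exists (N1 + N2).
    intros ch [H|H]; [apply H1 in H; lia|apply H2 in H; lia].
  - destruct IHW as [N HN]. exists N. intros ch [_ H]; auto.
Qed.

Theorem mainTheorem13 (Sg : signature) (Hdelta : forall v : val Sg, 1 <= delta Sg v)
  (G1 G2 : env Sg) (W1 W2 : sys Sg) :
  well_formed (G1, W1) -> well_formed (G2, W2) ->
  rbc (G1, W1) (G2, W2) ->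
  forall c : chan, idle G1 c -> idle G2 c.
Proof.
  intros [Hc1 Hw1] [Hc2 Hw2] [R [Hcf [Hsym [Hbp [Hrc [Hctx HR]]]]]] c Hi1.
  destruct (classic (idle G2 c)) as [|Hn]; auto. exfalso.
  destruct (free_bound W1) as [N1 HN1]; destruct (free_bound W2) as [N2 HN2].
  set (d := N1 + N2 + c + 1).
  assert (Hd1 : ~ free_ch d W1) by (intro H; apply HN1 in H; unfold d in H; lia).
  assert (Hd2 : ~ free_ch d W2) by (intro H; apply HN2 in H; unfold d in H; lia).
  assert (HcT : closed_sys (SProc (Tc Sg c d))) by (unfold closed_sys; simpl; tauto).
  assert (H0 := Hctx _ _ _ _ _ HR HcT).
  set (C1a := (G1, SPar W1 (SProc (PSigma (PNil Sg))))).
  assert (Hr1 : red (G1, SPar W1 (SProc (Tc Sg c d))) C1a).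
  { exists (LTau Sg). split; [intros; discriminate|]. split; [|reflexivity].
    simpl. apply tTauParR. unfold Tc. apply tSumL; [left; auto|]. apply tElse.
    simpl. unfold exposed. unfold idle in Hi1. lia. }
  destruct (Hrc _ _ _ H0 Hr1) as [C2a [Hs2a HR2a]].
  assert (HP1 : P1 d (fst (G1 d)) C1a).
  { split; [simpl; auto|]. split; [simpl; tauto|auto]. }
  destruct (G1_iter Hdelta Hcf Hrc _ HR2a HP1) as [C1b [C2b [HRb [Hs2b [Hfb Hib]]]]].
  assert (Hnb : ~ wbarb C1b d) by (destruct C1b; apply nobarb; auto).
  apply Hnb. apply (Hbp C2b C1b d (Hsym _ _ HRb)).
  assert (Hreach : red_star (G2, SPar W2 (SProc (Tc Sg c d))) C2b) by (eapply rt_trans; eauto).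
  assert (HI : Inv c d (fst C2b) (snd C2b) /\ wf_s (fst C2b) (snd C2b)).
  { apply (red_star_inv (fun C => Inv c d (fst C) (snd C) /\ wf_s (fst C) (snd C)))
      with (C := (G2, SPar W2 (SProc (Tc Sg c d)))); [|exact Hreach|].
    - intros [G0 Y0] [G' Y'] [l [Hl [Ht He]]] [Hi Hw]; simpl in *; subst.
      split; [eapply Inv_step; eauto|apply (WFP Hdelta Ht Hw)].
      intros [? [? ?]]; subst; eapply Hl; eauto.
    - simpl. split; [|split; auto].
      exists W2, (SProc (Tc Sg c d)). split; auto. left. split; auto. }
  destruct HI as [HI Hw]. destruct C2b as [G Y]. simpl in *.
  apply (path_wbarb Hdelta (c:=c)); auto.
  destruct (Hcf _ _ HRb) as [_ Hcb].
  eapply TP; eauto.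
Qed.
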